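(* Let $n,m\ge1$ be integers, $L>0$, $\lambda\in[0,1)$, and let $G_\alpha$ be the $3\times3$ matrix defined in the context. If $0<\alpha\le\min\Big\{\frac{(1-\lambda^2)^2}{35\lambda},\frac{\sqrt n}{\sqrt{8m}}\Big\}\frac1L$, then the spectral radius satisfies $\rho(G_\alpha)<1$; consequently $I_3-G_\alpha$ is invertible and $\sum_{k=0}^\infty G_\alpha^k=(I_3-G_\alpha)^{-1}$.
   Context: Expressions with $\lambda$ in a denominator are read as $+\infty$ when $\lambda=0$. The matrix $$G_\alpha:=\begin{bmatrix}\frac{1+\lambda^2}{2}&0&\frac{2\lambda^2\alpha^2L^2}{1-\lambda^2}\\ \frac9{4m}&1-\frac1{4m}&0\\ \frac{30.5}{1-\lambda^2}&\frac{97}8&\frac{1+\lambda^2}2\end{bmatrix}.$$ $\rho(\cdot)$ denotes spectral radius. *)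

(* Defs.v *)
From HB Require Import structures.
From mathcomp Require Import all_boot all_order all_algebra.
From mathcomp Require Import all_classical all_reals all_analysis.
From mathcomp Require Import complex.
Set Implicit Arguments. Unset Strict Implicit. Unset Printing Implicit Defensive.
Import Order.TTheory GRing.Theory Num.Theory numFieldTopology.Exports numFieldNormedType.Exports.
Local Open Scope ring_scope.
Local Open Scope classical_set_scope.

Definition spectral_radius (R : realType) (k : nat) (A : 'M[R]_k) : R :=
  sup [set ComplexField.Normc.normc z | z in [set z : R[i] |
         eigenvalue (map_mx (fun x : R => (x%:C)%C) A) z]].

Definition mx3 (R : ringType) (a b c d e f g h i : R) : 'M[R]_3 :=
  \matrix_(r < 3, s < 3) nth 0 (nth [::] [:: [:: a; b; c]; [:: d; e; f]; [:: g; h; i]] r) s.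

Definition Galpha (R : realType) (lam alpha L : R) (m : nat) : 'M[R]_3 :=
  mx3 ((1 + lam ^+ 2) / 2) 0 (2 * lam ^+ 2 * alpha ^+ 2 * L ^+ 2 / (1 - lam ^+ 2))
      (9 / (4 * m%:R)) (1 - 1 / (4 * m%:R)) 0
      ((61 / 2) / (1 - lam ^+ 2)) (97 / 8) ((1 + lam ^+ 2) / 2).

(* Main.v *)
Require Import Defs.
From HB Require Import structures.
From mathcomp Require Import all_boot all_order all_algebra.
From mathcomp Require Import all_classical all_reals all_analysis.
From mathcomp Require Import complex.
From mathcomp Require Import ring lra.
Import Order.TTheory GRing.Theory Num.Theory numFieldTopology.Exports numFieldNormedType.Exports.
Local Open Scope ring_scope.
Local Open Scope classical_set_scope.

Lemma perron_real (R : realType) (A : 'M[R]_3) (w : 'I_3 -> R) (c r : R) (y : 'I_3 -> R) :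
 (forall i, 0 < w i) -> (forall i j, 0 <= A i j) ->
 (forall j, \sum_i w i * A i j <= c * w j) ->
 (forall i, 0 <= y i) -> (exists k, 0 < y k) ->
 (forall j, r * y j <= \sum_i y i * A i j) -> r <= c.
Proof.
move=> wp Ap Hw yp [k yk] Hy.
case: (@arg_maxP _ R _ ord0 xpredT (fun j => y j / w j)) => // j0 _ Hmax.
set t := y j0 / w j0 in Hmax.
have Hyi : forall i, y i <= t * w i.
  by move=> i; rewrite -ler_pdivrMr ?wp //; exact: Hmax.
have tp : 0 < t.
  apply: lt_le_trans (Hmax k isT); exact: divr_gt0.
have yj0 : y j0 = t * w j0 by rewrite /t mulrVK // unitfE gt_eqF ?wp.
have yj0p : 0 < y j0 by rewrite yj0 mulr_gt0.
have : r * y j0 <= c * y j0.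
  apply: (le_trans (Hy j0)).
  apply: (@le_trans _ _ (\sum_i (t * w i) * A i j0)).
    by apply: ler_sum => i _; apply: ler_wpM2r.
  under eq_bigr do rewrite -mulrA.
  rewrite -mulr_sumr.
  rewrite yj0 mulrCA; apply: ler_wpM2l; [exact: ltW | exact: Hw].
by rewrite ler_pM2r.
Qed.

Lemma exists_c (R : realType) (A : 'M[R]_3) (w : 'I_3 -> R) :
 (forall i, 0 < w i) -> (forall i j, 0 <= A i j) ->
 (forall j, \sum_i w i * A i j < w j) ->
 exists c : R, [/\ 0 <= c, c < 1 & forall j, \sum_i w i * A i j <= c * w j].
Proof.
move=> wp Ap Hs.
exists (\big[Order.max/0]_j ((\sum_i w i * A i j) / w j)); split.
- exact: bigmax_ge_id.
- apply/bigmax_ltP; split => // j _.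
  by rewrite ltr_pdivrMr ?wp // mul1r.
- move=> j; rewrite -ler_pdivrMr ?wp //.
  by apply/bigmax_geP; right; exists j.
Qed.

Lemma pow_bound (R : realType) (A : 'M[R]_3) (w : 'I_3 -> R) c :
 0 <= c -> (forall i, 0 <= w i) -> (forall i j, 0 <= A i j) ->
 (forall j, \sum_i w i * A i j <= c * w j) ->
 forall N, (forall i j, 0 <= (A ^+ N) i j) /\
   forall j, \sum_i w i * (A ^+ N) i j <= c ^+ N * w j.
Proof.
move=> c0 wp Ap Hw; elim=> [|N [IH1 IH2]].
  split=> [i j|j]; first by rewrite expr0 mxE ler0n.
  rewrite expr0 mul1r (bigD1 j) //= mxE eqxx mulr1 big1 ?addr0 //.
  by move=> i /negbTE ij; rewrite mxE ij mulr0.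
split=> [i j|j]; rewrite exprSr -mulmxE.
  rewrite mxE.
  by apply: sumr_ge0 => k _; apply: mulr_ge0.
under eq_bigr do rewrite mxE mulr_sumr.
rewrite exchange_big /=.
apply: (@le_trans _ _ (\sum_k c ^+ N * w k * A k j)).
  apply: ler_sum => k _; under eq_bigr do rewrite mulrA.
  rewrite -mulr_suml; apply: ler_wpM2r => //; exact: IH2.
under eq_bigr do rewrite -mulrA.
rewrite -mulr_sumr exprSr -mulrA; apply: ler_wpM2l; first exact: exprn_ge0.
exact: Hw.
Qed.

Lemma entry_le_norm (R : realType) (B : 'M[R]_3) i j : `|B i j| <= `|B|.
Proof.
have -> : `|B| = mx_norm B by [].
rewrite mx_normrE; apply/bigmax_geP; right.
by exists (i, j).
Qed.

Lemma term_le_sum (R : realType) (f : 'I_3 -> R) k :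
  (forall i, 0 <= f i) -> f k <= \sum_i f i.
Proof.
move=> fp; rewrite (bigD1 k) //= lerDl; exact: sumr_ge0.
Qed.

Lemma pow_cvg0 (R : realType) (A : 'M[R]_3) (w : 'I_3 -> R) c (B : 'M[R]_3) :
 0 <= c -> c < 1 -> (forall i, 1 <= w i) -> (forall i j, 0 <= A i j) ->
 (forall j, \sum_i w i * A i j <= c * w j) ->
 (fun N => A ^+ N *m B) @ \oo --> (0 : 'M[R]_3).
Proof.
move=> c0 c1 w1 Ap Hw.
have wp : forall i, 0 <= w i by move=> i; apply: le_trans (w1 i).
have PB := @pow_bound R A w c c0 wp Ap Hw.
set K := \sum_k w k * `|B|.
have K0 : 0 <= K by apply: sumr_ge0 => k _; rewrite mulr_ge0.
have Hent : forall N i j, `|(A ^+ N *m B) i j| <= c ^+ N * K.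
  move=> N i j; have [P1 P2] := PB N.
  rewrite mxE /K mulr_sumr.
  apply: (le_trans (ler_norm_sum _ _ _)); apply: ler_sum => k _.
  rewrite normrM mulrA (ger0_norm (P1 i k)).
  apply: ler_pM => //; last exact: entry_le_norm.
  apply: (@le_trans _ _ (w i * (A ^+ N) i k)).
    by rewrite ler_peMl.
  apply: le_trans (P2 k).
  by apply: (@term_le_sum R (fun i' => w i' * (A ^+ N) i' k) i) => i'; rewrite mulr_ge0.
apply/cvgr0Pnorm_lt => eps eps0.
have Kp : 0 < K + 1 by rewrite ltr_wpDl.
have := @cvgr0_norm_lt _ _ _ _ _ _ (cvg_expr (_ : `|c| < 1)) (eps / (K + 1)).
have c1' : `|c| < 1 by rewrite ger0_norm.
move=> /(_ _) H; have {H} := H c1' (divr_gt0 eps0 Kp).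
apply: filterS => N HN.
have -> : `|A ^+ N *m B| = mx_norm (A ^+ N *m B) by [].
rewrite mx_normrE; apply: bigmax_lt => // -[i j] _ /=.
apply: (le_lt_trans (Hent N i j)).
rewrite ger0_norm ?exprn_ge0 // in HN.
rewrite ltr_pdivlMr // in HN.
apply: le_lt_trans HN; apply: ler_wpM2l; first exact: exprn_ge0.
by rewrite lerDl.
Qed.

Lemma series_tele (R : realType) (A : 'M[R]_3) N :
  series (fun k => A ^+ k) N * (1 - A) = 1 - A ^+ N.
Proof.
elim: N => [|N IH]; first by rewrite /series /= big_geq // mul0r expr0 subrr.
rewrite seriesSr mulrDl IH mulrBr mulr1 exprSr.
by rewrite addrA subrK.
Qed.

Lemma normc_C (R : realType) (x : R[i]) : `|x| = ((ComplexField.Normc.normc x)%:C)%C.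
Proof. by []. Qed.

Lemma normc_ge0 (R : realType) (x : R[i]) : 0 <= ComplexField.Normc.normc x.
Proof. have := normr_ge0 x; rewrite normc_C -[X in X <= _]/((0 : R)%:C)%C lecR //. Qed.

Lemma nz_entry (F : fieldType) (v : 'rV[F]_3) : v != 0 -> exists k, v 0 k != 0.
Proof.
move=> vn0; apply/existsP; apply: contraR vn0 => /existsPn H.
apply/eqP/matrixP => i j; rewrite (ord1 i) mxE; exact/eqP/negbNE/H.
Qed.

Lemma complex_eig (R : realType) (A : 'M[R]_3) (w : 'I_3 -> R) c z :
 (forall i, 0 < w i) -> (forall i j, 0 <= A i j) ->
 (forall j, \sum_i w i * A i j <= c * w j) ->
 eigenvalue (map_mx (fun x : R => (x%:C)%C) A) z ->
 ComplexField.Normc.normc z <= c.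
Proof.
move=> wp Ap Hw /eigenvalueP [v Hv vn0].
apply: (@perron_real R A w c _ (fun i => ComplexField.Normc.normc (v 0 i)) wp Ap Hw).
- by move=> i; exact: normc_ge0.
- have [k Hk] := @nz_entry _ v vn0; exists k.
  rewrite lt_def normc_ge0 andbT; apply/eqP => /ComplexField.Normc.eq0_normc.
  by move/eqP: Hk.
- move=> j; rewrite -lecR.
  have := congr1 (fun M => fun_of_matrix M 0 j) Hv; rewrite !mxE => Hj.
  rewrite rmorphM /= -!normc_C -normrM -Hj rmorph_sum /=.
  apply: (le_trans (ler_norm_sum _ _ _)); apply: ler_sum => i _.
  rewrite mxE normrM rmorphM /= normc_C ger0_norm //.
  by rewrite -[X in X <= _]/((0 : R)%:C)%C lecR.
Qed.

Lemma abstract_main (R : realType) (A : 'M[R]_3) (w : 'I_3 -> R) :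
 (forall i, 1 <= w i) -> (forall i j, 0 <= A i j) ->
 (forall j, \sum_i w i * A i j < w j) ->
 spectral_radius A < 1 /\ (1%:M - A) \in unitmx /\
 series (fun k => A ^+ k : 'M[R]_3) @ \oo --> (invmx (1%:M - A) : 'M[R]_3).
Proof.
move=> w1 Ap Hs.
have wp : forall i, 0 < w i by move=> i; apply: lt_le_trans (w1 i).
have [c [c0 c1 Hw]] := @exists_c R A w wp Ap Hs.
split.
  apply: le_lt_trans c1; rewrite /spectral_radius.
  have [ne|e] := pselect ([set ComplexField.Normc.normc z | z in [set z : R[i] |
         eigenvalue (map_mx (fun x : R => (x%:C)%C) A) z]] !=set0).
    apply: ge_sup => // _ [z Hz <-]; exact: (@complex_eig R A w c z wp Ap Hw Hz).
  move/set0P/negP/negbNE/eqP: e => ->; by rewrite sup0.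
have unitB : (1%:M - A) \in unitmx.
  apply/negPn/negP => nu.
  have : kermx (1%:M - A) != 0 by rewrite kermx_eq0 row_free_unit.
  move=> /rowV0Pn [v /sub_kermxP Hv vn0].
  have HvA : v *m A = v.
    by move: Hv; rewrite mulmxBr mulmx1 => /eqP; rewrite subr_eq0 => /eqP <-.
  have : 1 <= c.
    apply: (@perron_real R A w c 1 (fun i => `|v 0 i|) wp Ap Hw).
    - by move=> i; exact: normr_ge0.
    - have [k Hk] := @nz_entry _ v vn0; exists k; by rewrite normr_gt0.
    - move=> j; rewrite mul1r.
      have := congr1 (fun M => fun_of_matrix M 0 j) HvA; rewrite !mxE => <-.
      apply: (le_trans (ler_norm_sum _ _ _)); apply: ler_sum => i _.
      by rewrite normrM (ger0_norm (Ap i j)).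
  by rewrite leNgt c1.
split => //.
have -> : series (fun k => A ^+ k : 'M[R]_3) =
    (fun N => invmx (1%:M - A) - A ^+ N *m invmx (1%:M - A)).
  apply: funext => N.
  rewrite -[LHS](mulmxK unitB) mulmxE series_tele -mulmxE mulmxBl mul1mx.
  done.
rewrite -[X in _ --> X]subr0.
apply: cvgB; first exact: cvg_cst.
exact: (@pow_cvg0 R A w c _ c0 c1 w1 Ap Hw).
Qed.

Theorem lemma14 (R : realType) (n m : nat) (L lam alpha : R) :
  (1 <= n)%N -> (1 <= m)%N -> 0 < L -> 0 <= lam -> lam < 1 ->
  0 < alpha ->
  (lam != 0 -> alpha <= (1 - lam ^+ 2) ^+ 2 / (35 * lam) / L) ->
  alpha <= Num.sqrt (n%:R) / Num.sqrt (8 * m%:R) / L ->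
  spectral_radius (Galpha lam alpha L m) < 1 /\
  (1%:M - Galpha lam alpha L m) \in unitmx /\
  series (fun k => Galpha lam alpha L m ^+ k : 'M[R]_3) @ \oo
    --> (invmx (1%:M - Galpha lam alpha L m) : 'M[R]_3).
Proof.
move=> n1 m1 L0 l0 l1 a0 Ha _.
set s := 1 - lam ^+ 2.
have s0 : 0 < s by rewrite /s subr_gt0 expr_lt1.
have s1 : s <= 1 by rewrite /s lerBlDr lerDl sqr_ge0.
set M : R := m%:R.
have M1 : 1 <= M by rewrite /M ler1n.
have M0 : M != 0 by rewrite gt_eqF // (lt_le_trans _ M1).
have sn0 : s != 0 by rewrite gt_eqF.
set u := s^-1.
have us : u * s = 1 by rewrite mulVf.
have u1 : 1 <= u by rewrite /u invf_ge1.
have l2 : lam ^+ 2 = 1 - s by rewrite /s opprB addrC subrK.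
set P := lam * alpha * L.
have P0 : 0 <= P by rewrite /P !mulr_ge0 // ltW.
have HP : 35 * P <= s ^+ 2.
  have [l00|ln0] := eqVneq lam 0; first by rewrite /P l00 !mul0r mulr0 exprn_ge0 // ltW.
  have lp : 0 < lam by rewrite lt_def ln0.
  have := Ha ln0; rewrite -/s ler_pdivlMr // ler_pdivlMr ?mulr_gt0 //.
  by rewrite /P; move=> H; apply: le_trans H; rewrite le_eqVlt; apply/orP; left; apply/eqP; ring.
have HP2 : 1225 * P ^+ 2 <= s ^+ 4.
  have -> : 1225 * P ^+ 2 = (35 * P) ^+ 2 by ring.
  have -> : s ^+ 4 = (s ^+ 2) ^+ 2 by ring.
  by rewrite ler_sqr ?nnegrE ?mulr_ge0 ?exprn_ge0 // ltW.
have w1 : 300 / s ^+ 2 = 300 * u ^+ 2 by rewrite /u exprVn.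
apply: (@abstract_main R _ (fun i => nth 0 [:: 300 / s ^+ 2; 50 * M; 1] i)).
{ case=> [[|[|[|?]]] ?] //=.
  - rewrite w1; nra.
  - lra. }
{ move=> i j; rewrite /Galpha /mx3 mxE.
  case: i => [[|[|[|?]]] ?] //=; case: j => [[|[|[|?]]] ?] //=; rewrite -/s -/M.
  - by rewrite divr_ge0 // addr_ge0 // ?sqr_ge0.
  - by rewrite divr_ge0 ?(ltW s0) // !mulr_ge0 // ?sqr_ge0 // ltW.
  - rewrite subr_ge0 ler_pdivrMr; lra.
  - by rewrite divr_ge0 // ltW.
  - by rewrite divr_ge0 // addr_ge0 // ?sqr_ge0. }
{ case=> [[|[|[|?]]] ?] //=; rewrite !big_ord_recl big_ord0 /Galpha /mx3 !mxE /= -/s -/M ?l2 w1.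
  - have -> : 50 * M * (9 / (4 * M)) = 225 / 2 by field.
    have -> : 61 / 2 / s = 61 / 2 * u by [].
    nra.
  - have -> : 50 * M * (1 - 1 / (4 * M)) = 50 * M - 25 / 2 by field.
    lra.
  - have -> : 2 * (1 - s) * alpha ^+ 2 * L ^+ 2 / s = 2 * P ^+ 2 * u by rewrite /P /u -l2; field.
    have h3 : u ^+ 3 * s ^+ 4 = s by rewrite /u; field.
    have h2 : u ^+ 3 * (1225 * P ^+ 2) <= u ^+ 3 * s ^+ 4.
      by rewrite ler_wpM2l // exprn_ge0 // (le_trans _ u1).
    lra. }
Qed.
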